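(* Let $q=p^m$ with $p$ an odd prime, $m\ge1$, and $q\equiv 5\pmod 6$. For $b\in\mathbb{F}_{q^2}$ let $\delta(b)=\#\{u\in\mathbb{F}_{q^2}:\ 2u^{q+1}+u^2=b\}$. Then there are exactly $q-1$ elements $b\in\mathbb{F}_{q^2}^*$ with $\delta(b)=2$.
   Context: $\delta(b)$ equals $\delta_f(1,b+\tfrac14)$ for $f(x)=x^{q+2}$, where $\delta_f(a,b)=\#\{x\in\mathbb{F}_{q^2}: f(x+a)-f(x)=b\}$. *)

(* Defs.v *)
From mathcomp Require Import all_boot all_order all_algebra all_field.
Set Implicit Arguments. Unset Strict Implicit. Unset Printing Implicit Defensive.
Import GRing.Theory.
Local Open Scope ring_scope.

Definition delta (F : finFieldType) (q : nat) (b : F) : nat :=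
  #|[set u : F | 2 * u ^+ q.+1 + u ^+ 2 == b]|.

(* Main.v *)
Require Import Defs.
From mathcomp Require Import all_boot all_order all_algebra all_field all_fingroup all_solvable.
From mathcomp Require Import ring zify.
Set Implicit Arguments. Unset Strict Implicit. Unset Printing Implicit Defensive.
Import GRing.Theory.
Local Open Scope ring_scope.

Section Core.
Variable F : fieldType.
Variables r : F.
Hypothesis two_nz : (2:F) != 0.
Hypothesis three_nz : (3:F) != 0.
Hypothesis hr : r ^+ 2 = -3.

Lemma r_nz : r != 0.
Proof.
apply/eqP=> r0; move: hr; rewrite r0 expr0n /= => /eqP; rewrite eq_sym oppr_eq0.
by rewrite (negPf three_nz).
Qed.

Lemma r1_nz : 1 + r != 0.
Proof.
apply/eqP=> h; have : r = -1 by rewrite -(addKr 1 r) h addr0.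
move=> e; move: hr; rewrite e sqrrN expr1n => /eqP; rewrite -subr_eq0 opprK.
have -> : (1 + 3 : F) = 2 * 2 by ring.
by rewrite mulf_eq0 (negPf two_nz).
Qed.

Lemma r1'_nz : 1 - r != 0.
Proof.
apply/eqP=> h; have : r = 1 by apply/eqP; rewrite -subr_eq0 -opprB h oppr0.
move=> e; move: hr; rewrite e expr1n => /eqP; rewrite -subr_eq0 opprK.
have -> : (1 + 3 : F) = 2 * 2 by ring.
by rewrite mulf_eq0 (negPf two_nz).
Qed.

Definition vv (u y : F) := ((u - y) / r + (u + y) * r) / 2.
Definition vq (u y : F) := ((u - y) / r - (u + y) * r) / 2.

Lemma core_v u y : vv u y ^+ 2 + 2 * (vv u y * vq u y) = u ^+ 2 + 2 * (u * y).
Proof.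
apply/eqP; rewrite -subr_eq0; apply/eqP.
have rn := r_nz.
have -> : vv u y ^+ 2 + 2 * (vv u y * vq u y) - (u ^+ 2 + 2 * (u * y)) =
  (r ^+ 2 + 3) * (((u - y) ^+ 2 / r ^+ 2 - (u + y) ^+ 2) / 2 / 2).
  rewrite /vv /vq; field.
  by rewrite rn two_nz.
by rewrite hr addNr mul0r.
Qed.

Lemma core_veq u y : vv u y = u -> u - y = r * (u + y).
Proof.
move=> h; have rn := r_nz.
have : (1 - r) * ((u - y) - (u + y) * r) = 2 * r * (vv u y - u).
  rewrite /vv; field; by rewrite two_nz.
rewrite h subrr mulr0 => /eqP; rewrite mulf_eq0 (negPf r1'_nz) /= subr_eq0 => /eqP ->.
by rewrite mulrC.
Qed.

Lemma core_veqN u y : vv u y = - u -> u - y = - r * (u + y).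
Proof.
move=> h; have rn := r_nz.
have : (1 + r) * ((u - y) + (u + y) * r) = 2 * r * (vv u y + u).
  rewrite /vv; field; by rewrite two_nz.
rewrite h addNr mulr0 => /eqP; rewrite mulf_eq0 (negPf r1_nz) /= addr_eq0 => /eqP ->.
by rewrite mulNr mulrC.
Qed.

Definition lam := (1 - r) / (1 + r).

Lemma core_C u y w yw : u != 0 -> y = lam * u ->
  w ^+ 2 + 2 * (w * yw) = u ^+ 2 + 2 * (u * y) ->
  yw ^+ 2 + 2 * (w * yw) = y ^+ 2 + 2 * (u * y) ->
  w = u \/ w = - u.
Proof.
move=> u0 hy H2 H2'.
have r1 := r1_nz.
set s := u + y; set e := u - y; set sw := w + yw; set ew := w - yw.
have he : e = r * s.
  apply/eqP; rewrite -subr_eq0; apply/eqP; rewrite /e /s hy /lam; field.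
  by rewrite r1.
have hs : s != 0.
  have -> : s = u * (2 / (1 + r)) by rewrite /s hy /lam; field; rewrite r1.
  by rewrite mulf_neq0 // mulf_neq0 // invr_eq0.
have hE : e ^+ 2 = -3 * s ^+ 2 by rewrite he exprMn hr.
have X : (3 * sw ^+ 2 - ew ^+ 2) - (3 * s ^+ 2 - e ^+ 2) = 0.
  have -> : (3 * sw ^+ 2 - ew ^+ 2) - (3 * s ^+ 2 - e ^+ 2) =
     4 * ((w ^+ 2 + 2 * (w * yw)) - (u ^+ 2 + 2 * (u * y))) - 2 * ((w ^+ 2 + 2 * (w * yw)) - (yw ^+ 2 + 2 * (w * yw)) - ((u ^+ 2 + 2 * (u * y)) - (y ^+ 2 + 2 * (u * y)))).
    by rewrite /sw /ew /s /e; ring.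
  by rewrite H2 H2' !subrr; ring.
have Y : sw * ew - s * e = 0.
  have -> : sw * ew - s * e = ((w ^+ 2 + 2 * (w * yw)) - (yw ^+ 2 + 2 * (w * yw))) - ((u ^+ 2 + 2 * (u * y)) - (y ^+ 2 + 2 * (u * y))).
    by rewrite /sw /ew /s /e; ring.
  by rewrite H2 H2' subrr.
have Z : 3 * (sw ^+ 2 - s ^+ 2) ^+ 2 = 0.
  have -> : 3 * (sw ^+ 2 - s ^+ 2) ^+ 2 = sw ^+ 2 * ((3 * sw ^+ 2 - ew ^+ 2) - (3 * s ^+ 2 - e ^+ 2))
     + (sw * ew - s * e) * (sw * ew + s * e) + (s ^+ 2 - sw ^+ 2) * (e ^+ 2 + 3 * s ^+ 2).
    by ring.
  by rewrite X Y hE; ring.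
move/eqP: Z; rewrite mulf_eq0 (negPf three_nz) /= expf_eq0 /= subr_eq0.
have -> : (sw ^+ 2 == s ^+ 2) = ((sw - s) * (sw + s) == 0).
  by rewrite -subr_eq0; congr (_ == _); ring.
rewrite mulf_eq0 subr_eq0 addr_eq0 => /orP [] /eqP hsw.
- left.
  have hew : ew = e.
    apply/eqP; rewrite -subr_eq0; apply/eqP.
    apply: (mulfI hs); rewrite mulr0 mulrBr -[in s * ew]hsw.
    by apply/eqP; rewrite subr_eq0 -subr_eq0 Y.
  have -> : w = (sw + ew) / 2 by rewrite /sw /ew; field.
  by rewrite hsw hew /s /e; field.
- right.
  have hew : ew = - e.
    apply/eqP; rewrite -subr_eq0; apply/eqP.
    apply: (mulfI hs); rewrite mulr0.
    have -> : s * (ew - - e) = - (sw * ew - s * e) by rewrite hsw; ring.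
    by rewrite Y oppr0.
  have -> : w = (sw + ew) / 2 by rewrite /sw /ew; field.
  by rewrite hsw hew /s /e; field.
Qed.

End Core.

Lemma lam_of (F : fieldType) (r u y : F) : (2:F) != 0 -> (3:F) != 0 -> r ^+ 2 = -3 ->
  u - y = r * (u + y) -> y = lam r * u.
Proof.
move=> h2 h3 hr h; have r1 := r1_nz h2 hr.
apply/eqP; rewrite -subr_eq0; apply/eqP.
have -> : y - lam r * u = - ((u - y) - r * (u + y)) / (1 + r).
  by rewrite /lam; field; rewrite r1.
by rewrite h subrr oppr0 mul0r.
Qed.

Section Main.
Variable F : finFieldType.
Variable q : nat.
Hypothesis q_gt1 : (1 < q)%N.
Hypothesis cardF : #|F| = (q ^ 2)%N.
Hypothesis two_nz : (2:F) != 0.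
Hypothesis three_nz : (3:F) != 0.
Hypothesis frD : forall x y : F, (x + y) ^+ q = x ^+ q + y ^+ q.
Hypothesis frN : forall x : F, (- x) ^+ q = - x ^+ q.

Lemma frK (x : F) : (x ^+ q) ^+ q = x.
Proof. by rewrite -exprM -[(q * q)%N]/(q ^ 2)%N -cardF expf_card. Qed.

Lemma fr1 : (1 : F) ^+ q = 1. Proof. exact: expr1n. Qed.
Lemma fr2 : (2 : F) ^+ q = 2. Proof. by rewrite frD expr1n. Qed.
Lemma frB (x y : F) : (x - y) ^+ q = x ^+ q - y ^+ q. Proof. by rewrite frD frN. Qed.

Definition f (u : F) := 2 * u ^+ q.+1 + u ^+ 2.

Lemma f_alt u : f u = u ^+ 2 + 2 * (u * u ^+ q).
Proof. by rewrite /f exprS addrC. Qed.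

Lemma fr_f u : (f u) ^+ q = (u ^+ q) ^+ 2 + 2 * (u * u ^+ q).
Proof.
rewrite /f frD exprMn fr2 (exprAC u q.+1 q) (exprS (u ^+ q) q) frK (exprAC u 2 q).
by rewrite addrC [u ^+ q * u]mulrC.
Qed.

Lemma f0 : f 0 = 0.
Proof. by rewrite /f !expr0n /= mulr0 add0r. Qed.

Lemma fN u : f (- u) = f u.
Proof. by rewrite !f_alt frN sqrrN mulrNN. Qed.

Lemma neq_opp (u : F) : u != 0 -> u != - u.
Proof.
move=> u0; apply/eqP=> h; move/eqP: u0; apply.
have : 2 * u = 0.
  have -> : 2 * u = u - - u by ring.
  by rewrite -h subrr.
by move/eqP; rewrite mulf_eq0 (negPf two_nz) => /eqP.
Qed.

Lemma q_gt0 : (0 < q)%N. Proof. exact: ltnW. Qed.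

Lemma fr_vv (r u : F) : r ^+ 2 = -3 -> r ^+ q = - r ->
  (vv r u (u ^+ q)) ^+ q = vq r u (u ^+ q).
Proof.
move=> hr frr; have rn := r_nz three_nz hr.
rewrite /vv /vq !(expr_div_n, exprMn, frD, frN, fr2, frr, frK).
by rewrite expr1n; field; rewrite oppr_eq0 rn two_nz.
Qed.

Lemma fiber_lam (r u : F) : r ^+ 2 = -3 -> r ^+ q = - r -> u != 0 -> u ^+ q = lam r * u ->
  f u != 0 /\ [set w | f w == f u] = [set u; - u].
Proof.
move=> hr frr u0 hy.
have hw : forall w, f w = f u -> w = u \/ w = - u.
  move=> w hw; apply: (@core_C _ r two_nz three_nz hr u (u ^+ q) w (w ^+ q) u0 hy).
    by rewrite -!f_alt hw.
  by rewrite -(fr_f w) -(fr_f u) hw.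
split.
  apply/eqP=> h0.
  have H : u ^+ 2 - (u ^+ q) ^+ 2 = 0.
    have -> : u ^+ 2 - (u ^+ q) ^+ 2 = f u - (f u) ^+ q by rewrite fr_f f_alt; ring.
    by rewrite h0 expr0n /= gtn_eqF ?q_gt0 // subrr.
  have r1 := r1_nz two_nz hr; have rn := r_nz three_nz hr.
  move: H; rewrite hy.
  have -> : u ^+ 2 - (lam r * u) ^+ 2 = u ^+ 2 * (2 * 2 * r / (1 + r) ^+ 2).
    by rewrite /lam; field; rewrite r1.
  by apply/eqP; rewrite !mulf_neq0 ?expf_neq0 ?invr_eq0 ?expf_neq0.
apply/setP=> w; rewrite !inE; apply/idP/idP.
  by move/eqP/hw => [->|->]; rewrite eqxx ?orbT.
by case/orP=> /eqP ->; rewrite ?fN.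
Qed.

Lemma forward (r u : F) : r ^+ 2 = -3 -> r ^+ q = - r -> f u != 0 -> delta q (f u) = 2%N ->
  u ^+ q = lam r * u \/ u ^+ q = lam (- r) * u.
Proof.
move=> hr frr fu0 hd.
have u0 : u != 0 by apply: contraNneq fu0 => ->; rewrite f0.
have rn := r_nz three_nz hr.
have hr' : (- r) ^+ 2 = -3 by rewrite sqrrN.
set A := [set w | f w == f u].
have sub : [set u; - u] \subset A.
  by apply/subsetP=> w; rewrite in_set2 inE => /orP [] /eqP ->; rewrite ?fN.
have eqA : [set u; - u] = A.
  apply/eqP; rewrite eqEcard sub /= cards2 neq_opp //.
  by move: hd; rewrite /delta => ->.
have vA : vv r u (u ^+ q) \in A.
  rewrite inE; apply/eqP; rewrite [f (vv _ _ _)]f_alt fr_vv //.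
  by rewrite (@core_v _ r two_nz three_nz hr) f_alt.
rewrite -eqA in vA; case/set2P: vA => h.
  left; apply: (lam_of two_nz three_nz hr).
  exact: (@core_veq _ r two_nz three_nz hr).
right; apply: (lam_of two_nz three_nz hr').
rewrite (@core_veqN _ r two_nz three_nz hr) //.
Qed.


Definition U (mu : F) := [set u : F | (u != 0) && (u ^+ q.-1 == mu)].
Definition M := [set mu : F | mu ^+ q.+1 == 1].

Lemma U_eq mu u : (u \in U mu) = (u != 0) && (u ^+ q == mu * u).
Proof.
rewrite inE; case: (eqVneq u 0) => //= u0.
rewrite -[in u ^+ q](prednK q_gt0) exprSr.
by apply/eqP/eqP => [->|h] //; apply: (mulIf u0) h.
Qed.

Lemma qm1_gt0 : (0 < q.-1)%N.
Proof. by rewrite -subn1 subn_gt0. Qed.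

Lemma cardM : (#|M| <= q.+1)%N.
Proof.
rewrite cardE; apply: max_unity_roots => //; last exact: enum_uniq.
by apply/allP=> x; rewrite mem_enum inE unity_rootE.
Qed.

Lemma cardU_le mu : (#|U mu| <= q.-1)%N.
Proof.
have : (size (enum (U mu)) < size (('X^(q.-1) - mu%:P)%R : {poly F}))%N.
  apply: max_poly_roots; last exact: enum_uniq.
    by rewrite -size_poly_eq0 size_XnsubC // qm1_gt0.
  apply/allP=> x; rewrite mem_enum inE => /andP[_ /eqP h].
  by rewrite rootE !hornerE h subrr.
by rewrite size_XnsubC ?qm1_gt0 // -cardE.
Qed.

Lemma pow_unit (u : F) : u != 0 -> u ^+ (q.-1 * q.+1) = 1.
Proof.
move=> u0.
have e : (q.-1 * q.+1).+1 = #|F|.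
  rewrite cardF; move: q_gt1; case: q => // n _ /=.
  by rewrite -mulnn; lia.
apply: (mulIf u0); rewrite mul1r -exprSr e.
exact: expf_card.
Qed.

Lemma sumU : (\sum_(mu in M) #|U mu|)%N = (q ^ 2).-1.
Proof.
transitivity (\sum_(u : F | (u != 0)%R) 1)%N.
  rewrite [RHS](partition_big (fun u => u ^+ q.-1) (mem M)) /=; last first.
    by move=> u u0; rewrite inE -exprM (pow_unit u0).
  apply: eq_bigr => mu _; rewrite sum1dep_card.
  by apply: eq_card => u; rewrite !inE.
rewrite -cardF -(cardC1 (0:F)) -sum1_card.
by apply: eq_bigl => u; rewrite !inE.
Qed.

Lemma cardU_eq mu : mu \in M -> #|U mu| = q.-1.
Proof.
move=> muM; apply/eqP; rewrite eqn_leq cardU_le /=.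
have S := sumU; rewrite (bigD1 mu) //= in S.
have H1 : (\sum_(i in M | i != mu) #|U i| <= \sum_(i in M | i != mu) q.-1)%N.
  by apply: leq_sum => i _; exact: cardU_le.
rewrite sum_nat_cond_const in H1.
have H2 := cardD1 mu M; rewrite muM in H2.
have H3 : #|[set x | (x \in M) && (x != mu)]| = #|[predD1 M & mu]|.
  by apply: eq_card => x; rewrite !inE andbC.
have H4 := cardM.
rewrite H3 in H1.
move: S H1 H2 H4 q_gt1.
set a := #|U mu|; set b := (\sum_(i in M | i != mu) #|U i|)%N; set k := #|[predD1 M & mu]|.
move: a b k; case: q => // n a b k.
move=> S H1 H2 H4 _; rewrite /= in H1 *; rewrite H2 /= in H4; rewrite -mulnn in S.
nia.
Qed.


Lemma fr_lam (r : F) : r ^+ 2 = -3 -> r ^+ q = - r -> (lam r) ^+ q = lam (- r).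
Proof.
move=> hr frr; rewrite /lam !(expr_div_n, frD, frN, expr1n, frr).
by rewrite opprK.
Qed.

Lemma lam_M (r : F) : r ^+ 2 = -3 -> r ^+ q = - r -> lam r \in M.
Proof.
move=> hr frr; rewrite inE exprSr fr_lam //.
have r1 := r1_nz two_nz hr; have r1' := r1'_nz two_nz hr.
apply/eqP; rewrite /lam; field.
by rewrite r1 r1'.
Qed.

Lemma lam_neq (r : F) : r ^+ 2 = -3 -> lam r != lam (- r).
Proof.
move=> hr; have r1 := r1_nz two_nz hr; have r1' := r1'_nz two_nz hr.
have rn := r_nz three_nz hr.
rewrite -subr_eq0.
have -> : lam r - lam (- r) = - (2 * 2 * r) / ((1 + r) * (1 - r)).
  by rewrite /lam; field; rewrite r1 r1'.
by rewrite mulf_neq0 ?oppr_eq0 ?invr_eq0 ?mulf_neq0.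
Qed.

Definition B := [set b : F | (b != 0) & delta q b == 2%N].

Lemma inB (r : F) u : r ^+ 2 = -3 -> r ^+ q = - r ->
  (f u \in B) = (u \in U (lam r)) || (u \in U (lam (- r))).
Proof.
move=> hr frr; have hr' : (- r) ^+ 2 = -3 by rewrite sqrrN.
have frr' : (- r) ^+ q = - - r by rewrite frN frr.
rewrite !U_eq; apply/idP/idP.
  rewrite inE => /andP[fu0 /eqP hd].
  have u0 : u != 0 by apply: contraNneq fu0 => ->; rewrite f0.
  by case: (forward hr frr fu0 hd) => ->; rewrite u0 eqxx ?orbT.
have hd : forall u, delta q (f u) = #|[set w | f w == f u]| by [].
case/orP => /andP[u0 /eqP hy].
  have [fu0 hfib] := fiber_lam hr frr u0 hy.
  by rewrite inE fu0 hd hfib cards2 neq_opp.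
have [fu0 hfib] := fiber_lam hr' frr' u0 hy.
by rewrite inE fu0 hd hfib cards2 neq_opp.
Qed.

Lemma card_preB : #|[set u | f u \in B]| = (2 * #|B|)%N.
Proof.
rewrite -sum1_card (partition_big f (mem B)) /=; last by move=> u; rewrite inE.
rewrite mulnC -sum_nat_const; apply: eq_bigr => b bB.
rewrite sum1dep_card.
have -> : #|[set x | (x \in [set u | f u \in B]) && (f x == b)]| = delta q b.
  apply: eq_card => x; rewrite !inE; have -> : (2 * x ^+ q.+1 + x ^+ 2) = f x by [].
  case: (eqVneq (f x) b) => [->|h]; last by rewrite andbF.
  by rewrite andbT; move: bB; rewrite inE.
by move: bB; rewrite inE => /andP[_ /eqP].
Qed.

Lemma main_count (r : F) : r ^+ 2 = -3 -> r ^+ q = - r -> #|B| = q.-1.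
Proof.
move=> hr frr.
have hr' : (- r) ^+ 2 = -3 by rewrite sqrrN.
have frr' : (- r) ^+ q = - - r by rewrite frN frr.
have E : #|[set u | f u \in B]| = #|U (lam r) :|: U (lam (- r))|.
  by apply: eq_card => u; rewrite inE (inB u hr frr) in_setU.
have I0 : U (lam r) :&: U (lam (- r)) = set0.
  apply/setP=> u; rewrite !inE; apply/negP => /andP[/andP[_ /eqP h1] /andP[_ /eqP h2]].
  by move: (lam_neq hr); rewrite -h1 -h2 eqxx.
move: E; rewrite card_preB cardsU I0 cards0 subn0 !cardU_eq ?lam_M //.
lia.
Qed.

End Main.
Unset Implicit Arguments.
Local Close Scope ring_scope.

Lemma exists_r (F : finFieldType) (q : nat) :
  #|F| = (q ^ 2)%N -> q %% 3 = 2 ->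
  (forall x y : F, ((x + y) ^+ q = x ^+ q + y ^+ q)%R) ->
  exists r : F, (r ^+ 2 = -3 /\ r ^+ q = - r)%R.
Proof.
move=> cF q3 frD.
have d3 : 3 %| #|[set: {unit F}]|.
  rewrite card_finField_unit cF; rewrite (divn_eq q 3) q3.
  apply/dvdnP; exists (3 * (q %/ 3) * (q %/ 3) + 4 * (q %/ 3) + 1); nia.
have [x _ ox] := Cauchy (isT : prime 3) d3.
set w := val x.
have w3 : (w ^+ 3 = 1)%R by rewrite /w -FinRing.val_unitX -ox expg_order.
have w1 : (w != 1)%R.
  apply/eqP=> h; have x1 : x = 1%g by apply: val_inj; rewrite /= -/w h.
  by move: ox; rewrite x1 order1.
have hw : (w ^+ 2 + w + 1 = 0)%R.
  have : ((w - 1) * (w ^+ 2 + w + 1) = 0)%R.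
    have -> : ((w - 1) * (w ^+ 2 + w + 1) = w ^+ 3 - 1)%R by ring.
    by rewrite w3 subrr.
  by move/eqP; rewrite mulf_eq0 subr_eq0 (negPf w1) => /eqP.
exists (2 * w + 1)%R; split.
  have -> : ((2 * w + 1) ^+ 2 = 4 * (w ^+ 2 + w + 1) - 3 :> F)%R by ring.
  by rewrite hw mulr0 sub0r.
have wq : (w ^+ q = w ^+ 2)%R.
  by rewrite (divn_eq q 3) q3 exprD mulnC exprM w3 expr1n mul1r.
rewrite !frD exprMn wq expr1n.
have -> : (2 ^+ q = 2 :> F)%R by rewrite frD expr1n.
have -> : (2 * w ^+ 2 + 1 = - (2 * w + 1) + 2 * (w ^+ 2 + w + 1) :> F)%R by ring.
by rewrite hw mulr0 addr0.
Qed.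

Theorem proposition6 (F : finFieldType) (p m : nat) :
  prime p -> odd p -> 0 < m -> (p ^ m) %% 6 = 5 -> #|F| = (p ^ m) ^ 2 ->
  #|[set b : F | (b != 0)%R & delta (p ^ m) b == 2]| = (p ^ m).-1.
Proof.
move=> pp op m0 q5 cF.
have pF : p \in [char F]%R by apply: (card_finPcharP (n := (m * 2)%N)) => //; rewrite cF expnM.
have frD : forall x y : F, ((x + y) ^+ (p ^ m) = x ^+ (p ^ m) + y ^+ (p ^ m))%R.
  by move=> x y; apply: exprDn_pchar; rewrite pnatX (eq_pnat _ (pcharf_eq pF)) pnat_id.
have p1 := prime_gt1 pp.
have two_nz : (2 : F)%R != 0%R.
  apply/negP; rewrite -(dvdn_pcharf pF 2) => /(dvdn_leq (isT : 0 < 2)) h.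
  have p2 : p = 2 by lia.
  by move: op; rewrite p2.
have p3 : p != 3.
  apply/eqP=> p3; move: q5; rewrite p3 => q5.
  have : 3 %| 3 ^ m by apply: dvdn_exp.
  rewrite /dvdn -(modn_dvdm _ (isT : 3 %| 6)) q5.
  by [].
have three_nz : (3 : F)%R != 0%R.
  apply/negP; rewrite -(dvdn_pcharf pF 3) => /(dvdn_leq (isT : 0 < 3)) h.
  have : p = 2 \/ p = 3 by lia.
  case=> hp; first by move: op; rewrite hp.
  by move/eqP: p3.
have q3 : (p ^ m) %% 3 = 2 by rewrite -(modn_dvdm _ (isT : 3 %| 6)) q5.
have q1 : 1 < p ^ m by have := leq_mod (p ^ m) 6; rewrite q5; lia.
move: (p ^ m) q5 cF frD q3 q1 => q q5 cF frD q3 q1.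
have frN : forall x : F, ((- x) ^+ q = - x ^+ q)%R.
  move=> x; apply/eqP; rewrite -addr_eq0 -frD addNr expr0n /=.
  by rewrite gtn_eqF // ltnW.
have [r [hr frr]] := @exists_r F q cF q3 frD.
exact: (main_count q1 cF two_nz three_nz frD frN hr frr).
Qed.
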